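(* Let $G$ be a finite abelian group and $\Phi$ a normalized $3$-cocycle on $G$. If $V$ and $W$ are simple objects of ${}^{\mathbbm{k}G}_{\mathbbm{k}G}\mathcal{YD}^{\Phi}$ with $g_V=g_W$, then $\dim V=\dim W$.
   Context: $\mathbbm{k}$ is algebraically closed of characteristic zero. For $g\in G$, $\widetilde{\Phi}_g(x,y)=\frac{\Phi(g,x,y)\Phi(x,y,g)}{\Phi(x,g,y)}$. The braided tensor category ${}^{\mathbbm{k}G}_{\mathbbm{k}G}\mathcal{YD}^{\Phi}$ has objects the $G$-graded spaces $V=\bigoplus_gV_g$ with operators $e\triangleright-$ preserving each $V_g$, $1\triangleright v=v$, $e\triangleright(f\triangleright v)=\widetilde{\Phi}_g(e,f)(ef)\triangleright v$ for $v\in V_g$; tensor product: degree $gh$, $e\triangleright(X\otimes Y)=\widetilde{\Phi}_e(g,h)(e\triangleright X)\otimes(e\triangleright Y)$; associator $(X\otimes Y)\otimes Z\mapsto\Phi(e,f,g)^{-1}X\otimes(Y\otimes Z)$; braiding $X\otimes Y\mapsto(e\triangleright Y)\otimes X$. A simple object $V$ is concentrated in a single degree, denoted $g_V$. *)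

(* Defs.v *)
From HB Require Import structures.
From mathcomp Require Import all_boot all_order all_algebra all_fingroup.
Set Implicit Arguments. Unset Strict Implicit. Unset Printing Implicit Defensive.
Import GRing.Theory.
Local Open Scope ring_scope.

Definition normalized_3cocycle (k : fieldType) (gT : finGroupType)
    (Phi : gT -> gT -> gT -> k) : Prop :=
  (forall a b c, Phi a b c != 0) /\
  (forall a b c d,
      Phi b c d * Phi a ((b * c)%g) d * Phi a b c
      = Phi ((a * b)%g) c d * Phi a b ((c * d)%g)) /\
  (forall a b, Phi 1%g a b = 1 /\ Phi a 1%g b = 1 /\ Phi a b 1%g = 1).

Definition Phit (k : fieldType) (gT : finGroupType)
    (Phi : gT -> gT -> gT -> k) (g x y : gT) : k :=
  Phi g x y * Phi x y g / Phi x g y.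

(* An object of YD^Phi: a (finite-dimensional) G-graded space V = (+)_g deg g
   with linear operators act e preserving each V_g, act 1 = id and
   act e (act f v) = Phit g e f * act (ef) v for v in V_g. *)
Definition is_YDobj (k : fieldType) (gT : finGroupType)
    (Phi : gT -> gT -> gT -> k) (V : vectType k)
    (deg : gT -> {vspace V}) (act : gT -> 'End(V)) : Prop :=
  (\sum_(g : gT) deg g)%VS = fullv /\
  directv (\sum_(g : gT) deg g) /\
  (forall e g, (act e @: deg g <= deg g)%VS) /\
  (forall v, act 1%g v = v) /\
  (forall e f g v, v \in deg g ->
      act e (act f v) = Phit Phi g e f *: act ((e * f)%g) v).

Definition is_YDsubobj (k : fieldType) (gT : finGroupType) (V : vectType k)
    (deg : gT -> {vspace V}) (act : gT -> 'End(V)) (U : {vspace V}) : Prop :=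
  U = (\sum_(g : gT) (U :&: deg g))%VS /\
  (forall e, (act e @: U <= U)%VS).

Definition YD_simple (k : fieldType) (gT : finGroupType) (V : vectType k)
    (deg : gT -> {vspace V}) (act : gT -> 'End(V)) : Prop :=
  (fullv : {vspace V}) != 0%VS /\
  (forall U : {vspace V}, is_YDsubobj deg act U -> U = 0%VS \/ U = fullv).

(* Main.v *)
Require Import Defs.
From HB Require Import structures.
From mathcomp Require Import all_boot all_order all_algebra all_fingroup.
Set Implicit Arguments. Unset Strict Implicit. Unset Printing Implicit Defensive.
Import GRing.Theory.
Local Open Scope ring_scope.

Lemma invmxM_ (k : comUnitRingType) n (A B : 'M[k]_n) :
  A \in unitmx -> B \in unitmx -> invmx (A *m B) = invmx B *m invmx A.
Proof.
move=> uA uB.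
have uAB : A *m B \in unitmx by rewrite unitmx_mul uA uB.
have E : (invmx B *m invmx A) *m (A *m B) = 1%:M.
  by rewrite mulmxA -[invmx B *m invmx A *m A]mulmxA mulVmx // mulmx1 mulVmx.
by rewrite -[RHS]mulmx1 -(mulmxV uAB) mulmxA E mul1mx.
Qed.

Section Mat.
Variables (k : fieldType) (gT : finGroupType) (n : nat).
Variables (M : gT -> 'M[k]_n) (c : gT -> gT -> k).
Hypothesis npos : (0 < n)%N.
Hypothesis nz : n%:R != 0 :> k.
Hypothesis comm : forall x y : gT, (x * y = y * x)%g.
Hypothesis cnz : forall x y, c x y != 0.
Hypothesis M1 : M 1%g = 1%:M.
Hypothesis MM : forall x y, M y *m M x = c x y *: M (x * y)%g.
Hypothesis schur : forall T : 'M[k]_n, (forall x, M x *m T = T *m M x) ->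
  exists a, T = a%:M.

Lemma Munit x : M x \in unitmx.
Proof.
have : ((c x x^-1)^-1 *: M x^-1) *m M x = 1%:M.
  by rewrite -scalemxAl MM mulgV M1 scalerA mulVf ?scale1r.
by case/mulmx1_unit.
Qed.

Definition Psi (T : 'M[k]_n) := \sum_x invmx (M x) *m T *m M x.

Lemma Psi_scalar T : Psi T = ((#|gT|%:R * \tr T) / n%:R)%:M.
Proof.
have Hc : forall y, M y *m Psi T = Psi T *m M y.
  move=> y.
  have : invmx (M y) *m Psi T *m M y = Psi T.
    rewrite /Psi mulmx_sumr mulmx_suml.
    rewrite [RHS](reindex_inj (mulgI y)) /=.
    apply: eq_bigr => x _.
    have E : M x *m M y = c y x *: M (y * x)%g by rewrite MM.
    rewrite !mulmxA -invmxM_ ?Munit // -[_ *m T *m M x *m M y]mulmxA E invmxZ; last first.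
      by rewrite unitmxZ ?Munit // unitfE cnz.
    idtac.
    by rewrite -!scalemxAl -!scalemxAr scalerA mulVf ?cnz // scale1r.
  by move=> H; rewrite -{1}H !mulmxA mulmxV ?Munit // mul1mx.
have [a Ha] := schur (fun x => Hc x).
rewrite Ha; congr (_%:M).
have : \tr (Psi T) = \tr T *+ #|gT|.
  rewrite /Psi raddf_sum /= -sumr_const; apply: eq_bigr => x _.
  by rewrite mxtrace_mulC mulmxA mulmxV ?Munit // mul1mx.
rewrite Ha mxtrace_scalar => /(congr1 (fun z => z / n%:R)).
rewrite -(mulr_natr a) -(mulr_natr (\tr T)) mulfK // => ->.
by rewrite (mulrC (\tr T)).
Qed.


Lemma entry_delta (A B : 'M[k]_n) i j :
  (A *m delta_mx i j *m B) i j = A i i * B j j.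
Proof.
rewrite -(mul_delta_mx (0 : 'I_1)) mulmxA -colE -mulmxA -rowE.
by rewrite mxE big_ord1 !mxE.
Qed.

Lemma tr_delta (i j : 'I_n) : \tr (delta_mx i j : 'M[k]_n) = (i == j)%:R.
Proof.
rewrite /mxtrace (bigD1 i) //= big1 ?addr0; first by rewrite mxE eqxx.
by move=> l /negPf nl; rewrite mxE nl.
Qed.

Lemma sum_tr : \sum_x \tr (invmx (M x)) * \tr (M x) = #|gT|%:R.
Proof.
have H : forall i j : 'I_n,
    \sum_x invmx (M x) i i * M x j j = (Psi (delta_mx i j)) i j.
  move=> i j; rewrite /Psi summxE; apply: eq_bigr => x _.
  by rewrite entry_delta.
transitivity (\sum_(i < n) \sum_(j < n) (Psi (delta_mx i j)) i j).
  under eq_bigr do rewrite /mxtrace mulr_suml; rewrite exchange_big /=.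
  apply: eq_bigr => i _; under eq_bigr do rewrite mulr_sumr.
  rewrite exchange_big /=; apply: eq_bigr => j _; exact: H.
transitivity (\sum_(i < n) (#|gT|%:R / n%:R : k)).
  apply: eq_bigr => i _; rewrite (bigD1 i) //= big1 ?addr0.
    by rewrite Psi_scalar tr_delta eqxx mxE eqxx mulr1.
  by move=> j /negPf nj; rewrite Psi_scalar mxE eq_sym nj.
by rewrite sumr_const card_ord -(mulr_natr (#|gT|%:R / n%:R)) mulfVK.
Qed.


Definition Rset := [set x : gT | [forall y, c x y == c y x]].

Lemma trtr_in x : x \in Rset -> \tr (invmx (M x)) * \tr (M x) = (n ^ 2)%:R.
Proof.
rewrite inE => /forallP Hx.
have [a Ha] : exists a, M x = a%:M.
  by apply: schur => y; rewrite !MM (comm y x) (eqP (Hx y)).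
have ua : a^-1 * a = 1.
  have := mulVmx (Munit x); rewrite Ha invmx_scalar -scalar_mxM.
  move/(congr1 (fun A : 'M[k]_n => A (Ordinal npos) (Ordinal npos))).
  by rewrite !mxE eqxx /= !mulr1n.
rewrite Ha invmx_scalar !mxtrace_scalar mulrnAl mulrnAr ua.
by rewrite -mulrnA mulnn.
Qed.

Lemma trtr_out x : x \notin Rset -> \tr (invmx (M x)) * \tr (M x) = 0.
Proof.
rewrite inE => /forallPn [y Hy].
have E : M x *m M y = (c y x / c x y) *: (M y *m M x).
  by rewrite !MM (comm y x) scalerA divfK ?cnz.
have : \tr (M x) = (c y x / c x y) * \tr (M x).
  rewrite -{1}(mulmxK (Munit y) (M x)) E -scalemxAl mxtraceZ; congr (_ * _).
  by rewrite mxtrace_mulC mulmxA mulVmx ?Munit // mul1mx.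
move/eqP; rewrite -subr_eq0 -{1}(mul1r (\tr (M x))) -mulrBl mulf_eq0.
case/orP => [|/eqP->]; last by rewrite mulr0.
rewrite subr_eq0 => /eqP h.
by move: Hy; rewrite -[c y x](divfK (cnz x y)) -h mul1r eqxx.
Qed.

Lemma count_eq : ((n ^ 2 * #|Rset|)%N%:R : k) = #|gT|%:R.
Proof.
rewrite -sum_tr (bigID (fun x => x \in Rset)) /= [X in _ + X]big1; last first.
  by move=> x Hx; rewrite trtr_out.
rewrite addr0 (eq_bigr (fun _ => (n ^ 2)%:R)); last by move=> x; apply: trtr_in.
by rewrite sumr_const natrM mulr_natr.
Qed.

End Mat.
Import passmx.

Section Transfer.
Variables (k : closedFieldType) (gT : finGroupType) (Phi : gT -> gT -> gT -> k).
Hypothesis hchar : [pchar k] =i pred0.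
Hypothesis hab : abelian [set: gT].
Hypothesis hPhi : normalized_3cocycle Phi.
Variables (V : vectType k) (degV : gT -> {vspace V}) (actV : gT -> 'End(V)).
Hypothesis hV : is_YDobj Phi degV actV.
Hypothesis sV : YD_simple degV actV.
Variable g : gT.
Hypothesis gV : degV g = fullv.

Local Notation n := (\dim (fullv : {vspace V})).
Let e := vbasis (fullv : {vspace V}).
Let eb : basis_of fullv e := vbasisP fullv.
Let M x := mxof e e (actV x).
Let c := Phit Phi g.

Lemma natf_nz m : (0 < m)%N -> m%:R != 0 :> k.
Proof.
move=> m0; apply/negP => /(natf0_pchar m0) [p]; by rewrite hchar.
Qed.

Lemma T_npos : (0 < n)%N.
Proof. by rewrite lt0n dimv_eq0; case: sV. Qed.

Lemma T_comm (x y : gT) : (x * y = y * x)%g.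
Proof. by move/centsP: hab => h; apply: (h x (in_setT x) y (in_setT y)). Qed.

Lemma T_cnz x y : c x y != 0.
Proof.
case: hPhi => nz _.
by rewrite /c /Phit mulf_neq0 ?invr_eq0 ?mulf_neq0.
Qed.

Lemma T_M1 : M 1%g = 1%:M.
Proof.
case: hV => _ [_ [_ [h1 _]]].
rewrite /M; have -> : actV 1%g = \1%VF by apply/lfunP => v; rewrite h1 id_lfunE.
by rewrite mxof1 // (basis_free eb).
Qed.

Lemma T_MM x y : M y *m M x = c x y *: M (x * y)%g.
Proof.
case: hV => _ [_ [_ [_ hm]]].
rewrite /M -mxof_comp //.
have -> : (actV x \o actV y)%VF = c x y *: actV (x * y)%g.
  by apply/lfunP => v; rewrite comp_lfunE scale_lfunE (hm _ _ g) ?gV ?memvf.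
by rewrite linearZ.
Qed.

Lemma T_schur (T : 'M[k]_n) : (forall x, M x *m T = T *m M x) ->
  exists a, T = a%:M.
Proof.
move=> HT.
set L := hommx e e T.
have LT : mxof e e L = T by rewrite hommxK.
have Lc : forall x, (actV x \o L = L \o actV x)%VF.
  move=> x; apply: (can_inj (mxofK eb eb)).
  by rewrite !(@mxof_comp _ _ _ _ e e e eb) LT -HT.
have [a ra] : exists a, root (char_poly T) a.
  by apply/(closed_rootP (char_poly T)); rewrite size_char_poly eqSS -lt0n T_npos.
exists a.
have ev : eigenvalue T a by rewrite eigenvalue_root_char.
set U := leigenspace L a.
have Unz : U != 0%VS.
 move: ev; rewrite -LT => ev'; by rewrite /U (leigenspaceE eb) vsof_eq0.
have memU : forall v, (v \in U) = (L v == a *: v).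
  move=> v; rewrite /U /leigenspace memv_ker add_lfunE opp_lfunE scale_lfunE id_lfunE.
  by rewrite subr_eq0.
have sub : is_YDsubobj degV actV U.
  split.
    apply/eqP; rewrite eqEsubv; apply/andP; split.
      by apply: (sumv_sup g) => //; rewrite gV capvf.
    by apply/subv_sumP => i _; apply: capvSl.
  move=> x; apply/subvP => w /memv_imgP [u Uu ->].
  rewrite memU -comp_lfunE -Lc comp_lfunE.
  by move: Uu; rewrite memU => /eqP ->; rewrite linearZ.
case: sV => _ /(_ U sub) [U0|Uf]; first by rewrite U0 eqxx in Unz.
rewrite -LT; have -> : L = a *: \1%VF.
  apply/lfunP => v; rewrite scale_lfunE id_lfunE; apply/eqP.
  by rewrite -memU Uf memvf.
by rewrite linearZ /= mxof1 ?(basis_free eb) // scalemx1.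
Qed.

Lemma T_count : ((n ^ 2 * #|Rset c|)%N%:R : k) = #|gT|%:R.
Proof.
apply: (count_eq (M := M)).
- exact: T_npos.
- exact: natf_nz T_npos.
- exact: T_comm.
- exact: T_cnz.
- exact: T_M1.
- exact: T_MM.
- exact: T_schur.
Qed.

End Transfer.

Lemma natf_inj' (k : fieldType) : [pchar k] =i pred0 ->
  forall m p, m%:R = p%:R :> k -> m = p.
Proof.
move=> hc m p; wlog le : m p / (m <= p)%N.
  move=> H; case/orP: (leq_total m p) => h E; first exact: H.
  by symmetry; apply: H => //; symmetry.
move=> E; apply/eqP; rewrite eqn_leq le /= leqNgt; apply/negP => lt.
have h0 : (0 < p - m)%N by rewrite subn_gt0.
have : (p - m)%:R == 0 :> k by rewrite natrB ?(ltnW lt) // E subrr.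
by move/(natf0_pchar h0) => [q]; rewrite hc.
Qed.

Theorem proposition4p3 (k : closedFieldType) (gT : finGroupType)
    (Phi : gT -> gT -> gT -> k)
    (hchar : [pchar k] =i pred0)
    (hab : abelian [set: gT])
    (hPhi : normalized_3cocycle Phi)
    (V : vectType k) (degV : gT -> {vspace V}) (actV : gT -> 'End(V))
    (W : vectType k) (degW : gT -> {vspace W}) (actW : gT -> 'End(W))
    (hV : is_YDobj Phi degV actV) (hW : is_YDobj Phi degW actW)
    (sV : YD_simple degV actV) (sW : YD_simple degW actW)
    (g : gT) (gV : degV g = fullv) (gW : degW g = fullv) :
  \dim (fullv : {vspace V}) = \dim (fullv : {vspace W}).
Proof.
have hV' := T_count hchar hab hPhi hV sV gV.
have hW' := T_count hchar hab hPhi hW sW gW.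
have E := natf_inj' hchar (etrans hV' (esym hW')).
have G0 : (0 < #|gT|)%N by apply/card_gt0P; exists 1%g.
have r0 : (0 < #|Rset (Phit Phi g)|)%N.
  rewrite lt0n; apply/negP => /eqP r0.
  move: hV'; rewrite r0 muln0 => /esym/eqP; apply/negP.
  by rewrite natf_nz.
move: E; rewrite -!(mulnC #|Rset _|) => /eqP; rewrite eqn_pmul2l //.
by rewrite eqn_exp2r // => /eqP.
Qed.
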